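(* Let $M$ be an $R$-module. Then $M$ satisfies the dual of proper strong Property $\mathcal{A}$ if and only if $M$ satisfies the dual of Property $\mathcal{A}$ and $\mathfrak{m}\cap W_R(M)$ is an ideal of $R$ for every maximal ideal $\mathfrak{m}$ of $R$.
   Context: All rings are commutative with identity. For an $R$-module $M$, $W_R(M)=\{r\in R : rM\neq M\}$. An $R$-module $M$ satisfies the dual of Property $\mathcal{A}$ if for every finitely generated ideal $I$ of $R$ with $I\subseteq W_R(M)$ we have $IM\neq M$. $M$ satisfies the dual of proper strong Property $\mathcal{A}$ if for every proper finitely generated ideal $I=\langle a_1,\dots,a_n\rangle$ of $R$ with $a_i\in W_R(M)$ for all $i$, we have $IM\neq M$. *)

(* Defs.v *)
From mathcomp Require Import all_boot all_algebra.
Set Implicit Arguments. Unset Strict Implicit. Unset Printing Implicit Defensive.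
Import GRing.Theory.
Local Open Scope ring_scope.

Section Defs.
Variable R : comPzRingType.

Definition is_ideal (I : R -> Prop) : Prop :=
  [/\ I 0, (forall x y, I x -> I y -> I (x + y)) & (forall r x, I x -> I (r * x))].

Definition proper_ideal (I : R -> Prop) : Prop := is_ideal I /\ ~ I 1.

Definition maximal_ideal (m : R -> Prop) : Prop :=
  proper_ideal m /\
  forall J : R -> Prop, proper_ideal J -> (forall x, m x -> J x) -> forall x, J x -> m x.

Definition ideal_gen (s : seq R) : R -> Prop :=
  fun x => exists c : 'I_(size s) -> R, x = \sum_(i < size s) c i * s`_i.

Definition fg_ideal (I : R -> Prop) : Prop :=
  is_ideal I /\ exists s : seq R, forall x, I x <-> ideal_gen s x.

Variable M : lmodType R.

Definition ideal_mul_mod (I : R -> Prop) : M -> Prop :=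
  fun m => exists n (a : 'I_n -> R) (x : 'I_n -> M),
      (forall i, I (a i)) /\ m = \sum_(i < n) a i *: x i.

Definition IM_neq_M (I : R -> Prop) : Prop := ~ (forall m : M, ideal_mul_mod I m).

Definition W (r : R) : Prop := ~ (forall m : M, exists m' : M, m = r *: m').

Definition dual_property_A : Prop :=
  forall I : R -> Prop, fg_ideal I -> (forall x, I x -> W x) -> IM_neq_M I.

Definition dual_proper_strong_property_A : Prop :=
  forall s : seq R, proper_ideal (ideal_gen s) -> (forall a, a \in s -> W a) ->
    IM_neq_M (ideal_gen s).

End Defs.

(* Main.v *)
Require Import Defs.
From mathcomp Require Import all_boot all_algebra.
From mathcomp Require classical_sets.
From Stdlib Require Import Classical.
Set Implicit Arguments. Unset Strict Implicit.
Import GRing.Theory.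
Local Open Scope ring_scope.

Lemma ideal_ext (R : comPzRingType) (I I' : R -> Prop) :
  (forall x, I x <-> I' x) -> Defs.is_ideal I -> Defs.is_ideal I'.
Proof.
move=> E [H0 HD HM]; split; first by apply/E.
- by move=> x y /E Hx /E Hy; apply/E; apply: HD.
- by move=> r x /E Hx; apply/E; apply: HM.
Qed.

Lemma proper_ext (R : comPzRingType) (I I' : R -> Prop) :
  (forall x, I x <-> I' x) -> Defs.proper_ideal I -> Defs.proper_ideal I'.
Proof.
move=> E [HI H1]; split; first exact: ideal_ext HI.
by move/E.
Qed.

Lemma exists_max (R : comPzRingType) (J : R -> Prop) : Defs.proper_ideal J ->
  exists mm, Defs.maximal_ideal mm /\ forall x, J x -> mm x.
Proof.
move=> PJ.
have := @classical_sets.Zorn_bigcup R (fun A => Defs.proper_ideal (fun x => J x \/ A x)).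
rewrite /classical_sets.total_on /classical_sets.bigcup /classical_sets.subset /classical_sets.proper /=.
case.
- move=> F FP Ftot; case: PJ => [[J0 JD JM] J1].
  split; [split|].
  + by left.
  + move=> x y [Jx|[A FA Ax]] [Jy|[B FB By]].
    * by left; apply: JD.
    * have [[_ D _] _] := FP _ FB.
      by case: (D x y (or_introl Jx) (or_intror By)) => ?; [left|right; exists B].
    * have [[_ D _] _] := FP _ FA.
      by case: (D x y (or_intror Ax) (or_introl Jy)) => ?; [left|right; exists A].
    * have [AB|BA] := Ftot _ _ FA FB.
      - have [[_ D _] _] := FP _ FB.
        by case: (D x y (or_intror (AB _ Ax)) (or_intror By)) => ?; [left|right; exists B].
      - have [[_ D _] _] := FP _ FA.
        by case: (D x y (or_intror Ax) (or_intror (BA _ By))) => ?; [left|right; exists A].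
  + move=> r x [Jx|[A FA Ax]]; first by left; apply: JM.
    have [[_ _ Mu] _] := FP _ FA.
    by case: (Mu r x (or_intror Ax)) => ?; [left|right; exists A].
  + case=> [//|[A FA A1]]; have [_ N] := FP _ FA; apply: N; by right.
- move=> A [PA Amax]; exists (fun x => J x \/ A x); split; last by move=> x; left.
  split=> // K PK sub x Kx.
  right; apply: NNPP => nAx.
  suff KA : forall t, K t -> A t by apply: nAx; apply: KA.
  apply: NNPP => nKA; apply: (Amax K); first by split=> // t At; apply: sub; right.
  apply: proper_ext PK => t; split; [by right | by case=> // /(fun h => sub _ (or_introl h))].
Qed.

Lemma ideal_gen_ideal (R : comPzRingType) (s : seq R) : Defs.is_ideal (ideal_gen s).
Proof.
split.
- by exists (fun _ => 0); rewrite big1 // => i _; rewrite mul0r.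
- move=> x y [c ->] [d ->]; exists (fun i => c i + d i).
  by rewrite -big_split /=; apply: eq_bigr => i _; rewrite mulrDl.
- move=> r x [c ->]; exists (fun i => r * c i).
  by rewrite mulr_sumr; apply: eq_bigr => i _; rewrite mulrA.
Qed.

Lemma ideal_gen_mem (R : comPzRingType) (s : seq R) a : a \in s -> ideal_gen s a.
Proof.
move=> as_; have ilt : (index a s < size s)%N by rewrite index_mem.
exists (fun i => if i == Ordinal ilt then 1 else 0).
rewrite (bigD1 (Ordinal ilt)) //= eqxx mul1r nth_index // big1 ?addr0 //.
by move=> i /negbTE ->; rewrite mul0r.
Qed.

Lemma ideal_gen_sub (R : comPzRingType) (s : seq R) (I : R -> Prop) :
  Defs.is_ideal I -> (forall a, a \in s -> I a) -> forall x, ideal_gen s x -> I x.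
Proof.
move=> [I0 ID IM] Hs x [c ->].
apply: (big_ind I) => // i _; apply: IM; apply: Hs; exact: mem_nth.
Qed.

Lemma imm_mono (R : comPzRingType) (M : lmodType R) (I J : R -> Prop) (m : M) :
  (forall x, I x -> J x) -> ideal_mul_mod I m -> ideal_mul_mod J m.
Proof. by move=> IJ [n [a [x [Ha ->]]]]; exists n, a, x; split=> // i; apply: IJ. Qed.

Lemma W1 (R : comPzRingType) (M : lmodType R) : ~ W M 1.
Proof. by apply; move=> m; exists m; rewrite scale1r. Qed.

Theorem theorem3p3 (R : comPzRingType) (M : lmodType R) :
  dual_proper_strong_property_A M <->
  (dual_property_A M /\
   forall mm : R -> Prop, maximal_ideal mm -> is_ideal (fun x => mm x /\ W M x)).
Proof.
split.
- move=> H; split.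
  + move=> I [II [s Is]] IW Hall.
    have HIs : forall x, ideal_gen s x -> I x by move=> x /Is.
    have := H s _ _.
    case.
    * split; first exact: ideal_gen_ideal.
      by move/HIs/IW; apply: W1.
    * by move=> a /ideal_gen_mem/HIs/IW.
    * by move=> m; apply: imm_mono (Hall m) => x /Is.
  + move=> mm [[[m0 mD mM] m1] _]; split.
    * split=> // Hall0; apply: (H [::]).
      - split; first exact: ideal_gen_ideal.
        case=> c /= E; apply: m1; rewrite E big_ord0; exact: m0.
      - by [].
      - move=> m; have [m' ->] := Hall0 m; rewrite scale0r.
        exists 0%N, (fun _ => 0), (fun _ => 0); split; last by rewrite big_ord0.
        by case.
    * move=> x y [mx Wx] [my Wy]; split; first exact: mD.
      move=> Hall; apply: (H [:: x; y]).
      - split; first exact: ideal_gen_ideal.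
        move=> H1; apply: m1; apply: (ideal_gen_sub _ _ H1) => //.
        by move=> a; rewrite !inE => /orP[]/eqP->.
      - by move=> a; rewrite !inE => /orP[]/eqP->.
      - move=> m; have [m' ->] := Hall m.
        exists 2%N, (fun i => [:: x; y]`_i), (fun _ => m'); split.
        + by move=> i; apply: ideal_gen_mem; apply: mem_nth.
        + by rewrite !big_ord_recr big_ord0 /= add0r scalerDl.
    * move=> r x [mx Wx]; split; first exact: mM.
      move=> Hall; apply: Wx => m; have [m' ->] := Hall m.
      by exists (r *: m'); rewrite scalerA mulrC.
- move=> [HA Hmax] s Ps Ws.
  have [mm [Pmm sub]] := exists_max Ps.
  have Hi := Hmax mm Pmm.
  apply: HA; first by split; [exact: ideal_gen_ideal | exists s].
  move=> x Hx; have := ideal_gen_sub Hi _ Hx.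
  case=> // a Ha; split; [apply: sub; exact: ideal_gen_mem | exact: Ws].
Qed.
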